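(* In the testing setting described in the context, let $\hat\rho^e$ be obtained as in Lemma 3 (with parameters $\delta_0\in(0,1]$, $\epsilon_0>0$) and $e^e$ as in Lemma 4 (with parameters $\delta_1\in(0,1]$, $\epsilon_1>0$), the two optimization runs using independent samples, and assume the hypotheses of both lemmas hold. Define $\rho^e=\hat\rho^e-e^e$ and $\epsilon=2e^e+\epsilon_0+\epsilon_1$. Then $$\mathbb{P}\big[\rho^*\ge\rho^e\big]\ge(1-\delta_0)(1-\delta_1),\qquad\mathbb{P}\big[|\rho^*-\rho^e|\le\epsilon\big]\ge(1-\delta_0)(1-\delta_1),$$ where $\rho^*=\min_{d\in\mathcal{D}}\mathbb{E}_{\Pi(d)}[\rho(\phi(d))]$.
   Context: Testing setting: $\mathcal{D}\subset\mathbb{R}^l$ is a compact convex set of test parameters. For each $d\in\mathcal{D}$, the true system produces a random state-trajectory signal $\phi(d)$ with distribution $\Pi(d)$, and a simulator produces a random signal $\hat\phi(d)$ with distribution $\hat\Pi(d)$, independent of $\phi(d)$. A robustness measure $\rho$ maps signals to bounded real values. Define $\hat\rho^*=\min_{d\in\mathcal{D}}\mathbb{E}_{\hat\Pi(d)}[\rho(\hat\phi(d))]$ and $e^*=\max_{d\in\mathcal{D}}\mathbb{E}_{\Pi(d),\hat\Pi(d)}[|\rho(\phi(d))-\rho(\hat\phi(d))|]$. Lemma 3: under RKHS-norm bound $B$, $R$-sub-Gaussian sampling noise and a kernel with sublinear information gain for $d\mapsto-\mathbb{E}[\rho(\hat\phi(d))]$, the Modified GP-UCB algorithm (a GP-UCB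 procedure that stops when $2\beta_i\sigma_{i-1}(z_i)\le\epsilon$ and outputs $J^e=\mu_{i-1}(z_i)+\beta_i\sigma_{i-1}(z_i)$) produces $\hat\rho^e=-J^e$ with $\mathbb{P}[\hat\rho^*\ge\hat\rho^e]\ge1-\delta_0$ and $\mathbb{P}[|\hat\rho^*-\hat\rho^e|\le\epsilon_0]\ge1-\delta_0$. Lemma 4: under the analogous hypotheses for $d\mapsto\mathbb{E}[|\rho(\phi(d))-\rho(\hat\phi(d))|]$, the same algorithm produces $e^e=J^e$ with $\mathbb{P}[e^*\le e^e]\ge1-\delta_1$ and $\mathbb{P}[|e^*-e^e|\le\epsilon_1]\ge1-\delta_1$. *)

(* Defs.v *)
From HB Require Import structures.
From mathcomp Require Import all_boot all_order all_algebra.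
From mathcomp Require Import all_classical all_reals all_analysis.
Set Implicit Arguments. Unset Strict Implicit. Unset Printing Implicit Defensive.
Import Order.TTheory GRing.Theory Num.Theory.
Import numFieldNormedType.Exports.
Local Open Scope classical_set_scope.
Local Open Scope ring_scope.

Definition indep2 {dO dA dB} {Omega : measurableType dO}
  {A : measurableType dA} {B : measurableType dB} {R : realType}
  (P : probability Omega R) (X : Omega -> A) (Y : Omega -> B) : Prop :=
  forall (SA : set A) (SB : set B), measurable SA -> measurable SB ->
    P (X @^-1` SA `&` Y @^-1` SB) = (P (X @^-1` SA) * P (Y @^-1` SB))%E.

(* Real-valued expectation (used for bounded, hence integrable, variables). *)
Definition Ereal {d} {Omega : measurableType d} {R : realType}
  (P : probability Omega R) (f : Omega -> R) : R := fine ('E_P[f])%E.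

Definition is_min_on {T} {R : realType} (D : set T) (f : T -> R) (m : R) :=
  (exists2 d, D d & f d = m) /\ (forall d, D d -> m <= f d).

Definition is_max_on {T} {R : realType} (D : set T) (f : T -> R) (m : R) :=
  (exists2 d, D d & f d = m) /\ (forall d, D d -> f d <= m).

(* Main.v *)
Require Import Defs.
From HB Require Import structures.
From mathcomp Require Import all_boot all_order all_algebra.
From mathcomp Require Import all_classical all_reals all_analysis.
From mathcomp Require Import measurable_realfun.
From mathcomp Require Import ring lra.
Import Order.TTheory GRing.Theory Num.Theory.
Import numFieldNormedType.Exports.
Local Open Scope classical_set_scope.
Local Open Scope ring_scope.

Lemma bdd_int {d} {Omega : measurableType d} {R : realType} (P : probability Omega R)
  (f : Omega -> R) : measurable_fun setT f -> (exists M : R, forall w, `|f w| <= M) ->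
  f \in Lfun P 1.
Proof.
move=> mf [M hM]; apply/Lfun1_integrable.
apply: measurable_bounded_integrable => //.
  exact: (le_lt_trans (probability_le1 P measurableT) (ltry _)).
exists M; split; first exact: num_real.
by move=> x Mx y _; apply: le_trans (hM y) _; apply: ltW.
Qed.

Lemma key {d} {Omega : measurableType d} {R : realType} (P : probability Omega R)
  (f g : Omega -> R) : measurable_fun setT f -> measurable_fun setT g ->
  (exists M : R, forall w, `|f w| <= M) -> (exists M : R, forall w, `|g w| <= M) ->
  Ereal P f - Ereal P g <= Ereal P (fun w => `|f w - g w|).
Proof.
move=> mf mg bf bg.
have If := bdd_int P f mf bf; have Ig := bdd_int P g mg bg.
have mfg : measurable_fun setT (f \- g) by apply: measurable_funB.
have bfg : exists M : R, forall w, `|(f \- g) w| <= M.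
  case: bf => M1 h1; case: bg => M2 h2; exists (M1 + M2) => w.
  by rewrite /= (le_trans (ler_normB _ _))// lerD.
have Ifg := bdd_int P _ mfg bfg.
have Ia : (fun w => `|f w - g w|) \in Lfun P 1 by exact: (Lfun_norm Ifg).
rewrite /Ereal -fineB ?expectation_fin_num// -expectationB//.
rewrite fine_le ?expectation_fin_num//.
rewrite (le_trans (lee_abs _))// unlock.
apply: (le_abse_integral P measurableT); exact/measurable_EFinP.
Qed.

Lemma prob_prod {d} {Omega : measurableType d} {R : realType} (Q : probability Omega R)
  (X Y : Omega -> R) (mX : measurable_fun setT X) (mY : measurable_fun setT Y)
  (ind : indep2 Q X Y) (SA SB : set R) (mA : measurable SA) (mB : measurable SB)
  (a b : R) (a0 : 0 <= a) (b0 : 0 <= b)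
  (hA : (Q (X @^-1` SA) >= a%:E)%E) (hB : (Q (Y @^-1` SB) >= b%:E)%E)
  (h : Omega -> R) (mh : measurable_fun setT h)
  (sub : forall w, SA (X w) -> SB (Y w) -> 0 <= h w) :
  (Q [set w | (0 <= h w)%R] >= (a * b)%:E)%E.
Proof.
have mXA : measurable (X @^-1` SA) by rewrite -[X @^-1` _]setTI; exact: mX.
have mYB : measurable (Y @^-1` SB) by rewrite -[Y @^-1` _]setTI; exact: mY.
have mH : measurable [set w | (0 <= h w)%R].
  have -> : [set w | (0 <= h w)%R] = setT `&` h @^-1` `[0, +oo[%classic.
    apply/seteqP; split => w /=; rewrite in_itv /= andbT //; by case.
  exact: mh.
apply: (le_trans _ (le_measure Q _ _ (_ : X @^-1` SA `&` Y @^-1` SB `<=` _))).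
- have E : Q (X @^-1` SA `&` Y @^-1` SB) = (Q (X @^-1` SA) * Q (Y @^-1` SB))%E := ind SA SB mA mB.
  apply: (@le_trans _ _ (Q (X @^-1` SA) * Q (Y @^-1` SB))%E); last by rewrite le_eqVlt; apply/orP; left; apply/eqP; exact: (esym E).
  rewrite EFinM; apply: lee_pmul => //.
- by rewrite inE; apply: measurableI.
- by rewrite inE.
- by move=> w [hx hy]; exact: sub.
Qed.

Theorem theorem2
  (R : realType) (l : nat)
  (D : set 'rV[R]_l) (Dcompact : compact D)
  (Dconvex : convex_set (D : set (convex_lmodType 'rV[R]_l)))
  (* signal space and robustness measure *)
  (dS : measure_display) (S : measurableType dS)
  (rho : S -> R) (rho_meas : measurable_fun setT rho)
  (rho_bdd : exists M : R, forall s, `|rho s| <= M)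
  (* probability space carrying the true and simulated signals *)
  (dO : measure_display) (Omega : measurableType dO) (P : probability Omega R)
  (phi phihat : 'rV[R]_l -> Omega -> S)
  (phi_meas : forall d, measurable_fun setT (phi d))
  (phihat_meas : forall d, measurable_fun setT (phihat d))
  (phi_indep : forall d, D d -> indep2 P (phi d) (phihat d))
  (* the optimal values rho*, rhohat*, e* *)
  (rho_star rhohat_star e_star : R)
  (Hrho_star : is_min_on D (fun d => Ereal P (rho \o phi d)) rho_star)
  (Hrhohat_star : is_min_on D (fun d => Ereal P (rho \o phihat d)) rhohat_star)
  (He_star : is_max_on D
     (fun d => Ereal P (fun w => `|rho (phi d w) - rho (phihat d w)|)) e_star)
  (* the two optimization runs: random outputs on a probability space *)
  (dQ : measure_display) (Omega' : measurableType dQ) (Q : probability Omega' R)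
  (rhohat_e e_e : Omega' -> R)
  (rhohat_e_meas : measurable_fun setT rhohat_e)
  (e_e_meas : measurable_fun setT e_e)
  (runs_indep : indep2 Q rhohat_e e_e)
  (delta0 eps0 delta1 eps1 : R)
  (hd0 : 0 < delta0 <= 1) (he0 : 0 < eps0)
  (hd1 : 0 < delta1 <= 1) (he1 : 0 < eps1)
  (* guarantees of Lemma 3 *)
  (L3a : (Q [set w | (rhohat_e w <= rhohat_star)%R] >= (1 - delta0)%:E)%E)
  (L3b : (Q [set w | (`|rhohat_star - rhohat_e w| <= eps0)%R] >= (1 - delta0)%:E)%E)
  (* guarantees of Lemma 4 *)
  (L4a : (Q [set w | (e_star <= e_e w)%R] >= (1 - delta1)%:E)%E)
  (L4b : (Q [set w | (`|e_star - e_e w| <= eps1)%R] >= (1 - delta1)%:E)%E) :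
  let rho_e := fun w => rhohat_e w - e_e w in
  let eps := fun w => 2 * e_e w + eps0 + eps1 in
  (Q [set w | (rho_e w <= rho_star)%R] >= ((1 - delta0) * (1 - delta1))%:E)%E /\
  (Q [set w | (`|rho_star - rho_e w| <= eps w)%R] >= ((1 - delta0) * (1 - delta1))%:E)%E.
Proof.
move=> rho_e eps.
have mrp : forall d, measurable_fun setT (rho \o phi d)
  by move=> d; exact: measurableT_comp rho_meas (phi_meas d).
have mrh : forall d, measurable_fun setT (rho \o phihat d)
  by move=> d; exact: measurableT_comp rho_meas (phihat_meas d).
have [M hM] := rho_bdd.
have bp : forall d, exists M : R, forall w, `|(rho \o phi d) w| <= M
  by move=> d; exists M => w; exact: hM.
have bh : forall d, exists M : R, forall w, `|(rho \o phihat d) w| <= M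
  by move=> d; exists M => w; exact: hM.
have K1 : forall d, D d ->
    Ereal P (rho \o phihat d) - Ereal P (rho \o phi d) <= e_star.
  move=> d Dd; apply: le_trans (He_star.2 d Dd).
  have := key P _ _ (mrh d) (mrp d) (bh d) (bp d).
  have -> : (fun w => `|(rho \o phihat d) w - (rho \o phi d) w|) =
            (fun w => `|rho (phi d w) - rho (phihat d w)|).
    by apply: funext => w /=; rewrite distrC.
  by [].
have K2 : forall d, D d ->
    Ereal P (rho \o phi d) - Ereal P (rho \o phihat d) <= e_star.
  move=> d Dd; apply: le_trans (He_star.2 d Dd).
  exact: key P _ _ (mrp d) (mrh d) (bp d) (bh d).
have e0 : 0 <= e_star.
  case: He_star => -[d0 Dd0 <-] _.
  by apply: fine_ge0; apply: expectation_ge0 => w.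
have lo : rhohat_star - e_star <= rho_star.
  case: Hrho_star => -[d0 Dd0 <-] _.
  have := Hrhohat_star.2 d0 Dd0; have := K1 d0 Dd0; lra.
have hi : rho_star <= rhohat_star + e_star.
  case: Hrhohat_star => -[d0 Dd0 <-] _.
  have := Hrho_star.2 d0 Dd0; have := K2 d0 Dd0; lra.
have mA : measurable (`]-oo, rhohat_star]%classic : set R) by exact: measurable_itv.
have mB : measurable (`[e_star, +oo[%classic : set R) by exact: measurable_itv.
have mA' : measurable (`[rhohat_star - eps0, rhohat_star + eps0]%classic : set R)
  by exact: measurable_itv.
have EA : rhohat_e @^-1` `]-oo, rhohat_star]%classic =
          [set w | (rhohat_e w <= rhohat_star)%R].
  by apply/seteqP; split => w /=; rewrite in_itv /=.
have EB : e_e @^-1` `[e_star, +oo[%classic = [set w | (e_star <= e_e w)%R].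
  by apply/seteqP; split => w /=; rewrite in_itv /= andbT.
have EA' : rhohat_e @^-1` `[rhohat_star - eps0, rhohat_star + eps0]%classic =
          [set w | (`|rhohat_star - rhohat_e w| <= eps0)%R].
  apply/seteqP; split => w /=; rewrite in_itv /= ler_norml; 
    move=> /andP[h1 h2]; apply/andP; split; lra.
have d0' : 0 <= 1 - delta0 by case/andP: hd0 => _ ?; lra.
have d1' : 0 <= 1 - delta1 by case/andP: hd1 => _ ?; lra.
have mre : measurable_fun setT rho_e by exact: measurable_funB.
split.
- have -> : [set w | (rho_e w <= rho_star)%R] = [set w | (0 <= rho_star - rho_e w)%R].
    by apply/seteqP; split => w /=; rewrite subr_ge0.
  apply: (prob_prod Q _ _ rhohat_e_meas e_e_meas runs_indep _ _ mA mB _ _ d0' d1').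
  + by rewrite EA.
  + by rewrite EB.
  + by apply: measurable_funB => //; exact: measurable_cst.
  + move=> w; rewrite /= !in_itv /= andbT => h1 h2.
    rewrite subr_ge0 /rho_e; lra.
- have -> : [set w | (`|rho_star - rho_e w| <= eps w)%R] =
            [set w | (0 <= eps w - `|rho_star - rho_e w|)%R].
    by apply/seteqP; split => w /=; rewrite subr_ge0.
  apply: (prob_prod Q _ _ rhohat_e_meas e_e_meas runs_indep _ _ mA' mB _ _ d0' d1').
  + by rewrite EA'.
  + by rewrite EB.
  + have meps : measurable_fun setT eps.
      rewrite /eps; apply: measurable_funD; last exact: measurable_cst.
      apply: measurable_funD; last exact: measurable_cst.
      by apply: measurable_funM => //; exact: measurable_cst.
    apply: measurable_funB => //.
    apply: measurableT_comp => //.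
    by apply: measurable_funB => //; exact: measurable_cst.
  + move=> w; rewrite /= !in_itv /= andbT => /andP[h1 h2] h3.
    rewrite subr_ge0 /eps /rho_e ler_norml; apply/andP; split; lra.
Qed.
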